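(* Let $k\ge 2$ be an integer, $1/2<q<1$. Let $y^*$ be a point with all coordinates strictly positive at which $P$ attains its maximum over $\Delta_k$, and suppose $y^*\neq(1/k,\dots,1/k)$. Then the coordinates of $y^*$ take exactly two distinct values $a$ and $b$, with $a<1-q<b$.
   Context: $\Delta_k=\{y\in\mathbb R^k: y_i\ge 0,\ \sum_i y_i=1\}$. For $y\in\Delta_k$, $P(y)=\sum_{i=1}^k y_i^q\prod_{j\ne i}(1-y_j)^q$. *)

(* Defs.v *)
From mathcomp Require Import all_boot all_order all_algebra.
From mathcomp Require Import all_classical all_reals all_analysis.
Set Implicit Arguments. Unset Strict Implicit. Unset Printing Implicit Defensive.
Import Order.TTheory GRing.Theory Num.Theory.
Local Open Scope ring_scope.

Definition in_simplex (R : realType) (k : nat) (y : 'I_k -> R) : Prop :=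
  (forall i, 0 <= y i) /\ \sum_(i < k) y i = 1.

Definition Pq_fun (R : realType) (k : nat) (q : R) (y : 'I_k -> R) : R :=
  \sum_(i < k) (y i `^ q * \prod_(j < k | j != i) (1 - y j) `^ q).

(* Main.v *)
Require Import Defs.
From mathcomp Require Import all_boot all_order all_algebra.
From mathcomp Require Import all_classical all_reals all_analysis.
From mathcomp Require Import ring lra.
Import Order.TTheory GRing.Theory Num.Theory.
Set Implicit Arguments. Unset Strict Implicit. Unset Printing Implicit Defensive.
Local Open Scope ring_scope.

Lemma is_derive_affine (R : realType) (c s t : R) :
  is_derive t 1 (fun u : R => c + s * u) s.
Proof.
have H : is_derive t 1 (cst c + s *: (id : R -> R)) (0 + s *: (1:R)).
  exact: is_deriveD.
rewrite add0r scaler1 in H; exact: H.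
Qed.

Lemma is_derive_powR_affine (R : realType) (q c s t : R) : 0 < c + s * t ->
  is_derive t 1 (fun u : R => (c + s * u) `^ q) (q * (c + s * t) `^ (q - 1) * s).
Proof.
move=> h.
have H := (@is_derive1_comp R (fun v : R => v `^ q) (fun u : R => c + s * u) t _ _ (is_derive1_powR q h) (is_derive_affine c s t)).
exact H.
Qed.

Definition Gf (R : realType) (q s : R) := (q - 1) * ln s - q * ln (1 - s).

Lemma is_derive_cminus (R : realType) (c t : R) :
  is_derive t 1 (fun u : R => c - u) (-1).
Proof.
have H : is_derive t 1 (cst c - (id : R -> R)) (0 - (1:R)).
  exact: is_deriveB.
rewrite sub0r in H; exact: H.
Qed.

Lemma is_derive_G (R : realType) (q x : R) : 0 < x -> x < 1 ->
  is_derive x 1 (Gf q) ((q - 1) / x + q / (1 - x)).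
Proof.
move=> x0 x1.
have h1 := @is_derive1_ln R x x0.
have hp : 0 < 1 - x by lra.
have h2 := (@is_derive1_comp R (@ln R) (fun u : R => 1 - u) x _ _ (is_derive1_ln hp) (is_derive_cminus 1 x)).
have H := is_deriveB (is_deriveZ (q - 1) h1) (is_deriveZ q h2).
have E : (q - 1) *: x^-1 - q *: ((1 - x)^-1 * -1) = (q - 1) / x + q / (1 - x).
  rewrite /GRing.scale /=. rewrite mulrN1 mulrN opprK //.
rewrite E in H; exact: H.
Qed.

Lemma Gder_eq (R : realType) (q x : R) : 0 < x -> x < 1 ->
  (q - 1) / x + q / (1 - x) = (x - (1 - q)) / (x * (1 - x)).
Proof.
move=> x0 x1; field.
apply/andP; split; rewrite gt_eqF //; lra.
Qed.

Lemma G_dec (R : realType) (q s t : R) : 0 < q -> q < 1 ->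
  0 < s -> s < t -> t <= 1 - q -> Gf q t < Gf q s.
Proof.
move=> q0 q1 s0 st tq.
apply: (@ltr0_derive1_decr R (Gf q) s t) => //.
- move=> x; rewrite in_itv /= => /andP [h1 h2].
  have [d _] := @is_derive_G R q x ltac:(lra) ltac:(lra); exact: d.
- move=> x; rewrite in_itv /= => /andP [h1 h2].
  rewrite derive1E.
  have [_ ->] := @is_derive_G R q x ltac:(lra) ltac:(lra).
  rewrite Gder_eq; try lra.
  rewrite ltr_pdivrMr ?mul0r; try lra.
  apply: mulr_gt0; lra.
- apply: derivable_within_continuous => x; rewrite in_itv /= => /andP [h1 h2].
  have [d _] := @is_derive_G R q x ltac:(lra) ltac:(lra); exact: d.
Qed.

Lemma G_inc (R : realType) (q s t : R) : 0 < q -> q < 1 ->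
  1 - q <= s -> s < t -> t < 1 -> Gf q s < Gf q t.
Proof.
move=> q0 q1 s0 st tq.
apply: (@gtr0_derive1_incr R (Gf q) s t) => //.
- move=> x; rewrite in_itv /= => /andP [h1 h2].
  have [d _] := @is_derive_G R q x ltac:(lra) ltac:(lra); exact: d.
- move=> x; rewrite in_itv /= => /andP [h1 h2].
  rewrite derive1E.
  have [_ ->] := @is_derive_G R q x ltac:(lra) ltac:(lra).
  rewrite Gder_eq; try lra.
  rewrite ltr_pdivlMr ?mul0r; try lra.
  apply: mulr_gt0; lra.
- apply: derivable_within_continuous => x; rewrite in_itv /= => /andP [h1 h2].
  have [d _] := @is_derive_G R q x ltac:(lra) ltac:(lra); exact: d.
Qed.

Lemma gG (R : realType) (q s : R) : 0 < s -> s < 1 ->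
  s `^ q / (s * (1 - s) `^ q) = expR (Gf q s).
Proof.
move=> s0 s1.
have s1' : 0 < 1 - s by lra.
rewrite /Gf /powR !gt_eqF //.
rewrite -{2}(@lnK R s) ?posrE //.
rewrite -expRD -expRN -expRD; congr expR.
rewrite mulrC [q * ln (1 - s)]mulrC; ring.
Qed.

Section Path.
Variables (R : realType) (k : nat) (ys : 'I_k -> R) (i j : 'I_k).
Hypothesis ij : i != j.

Definition yt (t : R) : 'I_k -> R :=
  fun l => if l == i then ys i + t else if l == j then ys j - t else ys l.

Lemma prod_path (h : R -> R) t :
  \prod_(l < k) h (yt t l) =
  h (ys i + t) * h (ys j - t) * \prod_(l < k | (l != i) && (l != j)) h (ys l).
Proof.
rewrite (bigD1 i) //= (bigD1 j) /=; last by rewrite eq_sym.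
rewrite /yt eqxx eq_sym (negbTE ij) eqxx mulrA.
congr (_ * _); apply: eq_bigr => l /andP [l1 l2].
by rewrite (negbTE l1) (negbTE l2).
Qed.

Lemma sum_path (h : R -> R) t :
  \sum_(l < k) h (yt t l) =
  h (ys i + t) + h (ys j - t) + \sum_(l < k | (l != i) && (l != j)) h (ys l).
Proof.
rewrite (bigD1 i) //= (bigD1 j) /=; last by rewrite eq_sym.
rewrite /yt eqxx eq_sym (negbTE ij) eqxx addrA.
congr (_ + _); apply: eq_bigr => l /andP [l1 l2].
by rewrite (negbTE l1) (negbTE l2).
Qed.

End Path.

Lemma P_PiS (R : realType) (k : nat) (q : R) (y : 'I_k -> R) :
  (forall l, y l < 1) ->
  Pq_fun q y = (\prod_(l < k) (1 - y l) `^ q) * \sum_(l < k) (y l) `^ q / (1 - y l) `^ q.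
Proof.
move=> y1; rewrite /Pq_fun mulr_sumr; apply: eq_bigr => l _.
rewrite [X in _ = X * _](bigD1 l) //=.
have h : 0 < (1 - y l) `^ q by apply: powR_gt0; have := y1 l; lra.
field; by rewrite gt_eqF.
Qed.

Lemma powRm1 (R : realType) (q a : R) : 0 < a -> a `^ (q - 1) = a `^ q / a.
Proof.
move=> a0; rewrite powRB ?powRr1 ?ltW //.
by apply/implyP => _; rewrite gt_eqF.
Qed.

Lemma core (R : realType) (q x z C Rs e : R) :
  0 < q -> 0 < x -> 0 < z -> 0 < C -> 0 < e ->
  e <= x -> e <= z -> e <= 1 - x -> e <= 1 - z ->
  (forall t : R, -e < t < e ->
     C * (1 - x + -1 * t) `^ q * (1 - z + 1 * t) `^ q *
       (Rs + (x + 1 * t) `^ q * ((1 - x + -1 * t) `^ q)^-1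
           + (z + -1 * t) `^ q * ((1 - z + 1 * t) `^ q)^-1)
     <= C * (1 - x + -1 * 0) `^ q * (1 - z + 1 * 0) `^ q *
       (Rs + (x + 1 * 0) `^ q * ((1 - x + -1 * 0) `^ q)^-1
           + (z + -1 * 0) `^ q * ((1 - z + 1 * 0) `^ q)^-1)) ->
  (x `^ q / (x * (1 - x) `^ q) - (Rs + x `^ q / (1 - x) `^ q + z `^ q / (1 - z) `^ q)) / (1 - x)
  = (z `^ q / (z * (1 - z) `^ q) - (Rs + x `^ q / (1 - x) `^ q + z `^ q / (1 - z) `^ q)) / (1 - z).
Proof.
move=> q0 x0 z0 C0 e0 ex ez ex1 ez1 Hmax.
pose Phi : R -> R := (cst C * (fun u : R => (1 - x + -1 * u) `^ q) *
 (fun u : R => (1 - z + 1 * u) `^ q) *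
 (cst Rs +
  (fun u : R => (x + 1 * u) `^ q) *
  (fun y : R => ((1 - x + -1 * y) `^ q)^-1) +
  (fun u : R => (z + -1 * u) `^ q) *
  (fun y : R => ((1 - z + 1 * y) `^ q)^-1))).
have mk (t : R) : -e < t < e -> derivable Phi t 1.
  move=> /andP [t1 t2].
have p1 : 0 < (1 - x) + (-1) * t by lra.
  have p2 : 0 < (1 - z) + 1 * t by lra.
  have p3 : 0 < x + 1 * t by lra.
  have p4 : 0 < z + (-1) * t by lra.
  have d1 := is_derive_powR_affine q p1.
  have d2 := is_derive_powR_affine q p2.
  have d3 := is_derive_powR_affine q p3.
  have d4 := is_derive_powR_affine q p4.
  have n1 : (fun u : R => (1 - x + -1 * u) `^ q) t != 0 by rewrite gt_eqF // powR_gt0.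
  have n2 : (fun u : R => (1 - z + 1 * u) `^ q) t != 0 by rewrite gt_eqF // powR_gt0.
  have H := (is_deriveM (is_deriveM (is_deriveM (is_derive_cst C t 1) d1) d2)
     (is_deriveD (is_deriveD (is_derive_cst Rs t 1) (is_deriveM d3 (@is_deriveV R (fun u : R => (1 - x + -1 * u) `^ q) t _ 1 n1 d1)))
          (is_deriveM d4 (@is_deriveV R (fun u : R => (1 - z + 1 * u) `^ q) t _ 1 n2 d2)))).
  by case: H.
have Dmax : is_derive (0:R) (1:R) Phi (0:R).
  apply: (@derive1_at_max R Phi (-e) e 0).
  - lra.
  - by move=> t; rewrite in_itv /=; apply: mk.
  - rewrite in_itv /=; apply/andP; split; lra.
  - move=> t; rewrite in_itv /= => ht; exact: (Hmax t ht).
have t1 : - e < 0 by lra.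
  have t2 : (0:R) < e by lra.
  set t := (0:R) in t1 t2 *.
have p1 : 0 < (1 - x) + (-1) * t by lra.
  have p2 : 0 < (1 - z) + 1 * t by lra.
  have p3 : 0 < x + 1 * t by lra.
  have p4 : 0 < z + (-1) * t by lra.
  have d1 := is_derive_powR_affine q p1.
  have d2 := is_derive_powR_affine q p2.
  have d3 := is_derive_powR_affine q p3.
  have d4 := is_derive_powR_affine q p4.
  have n1 : (fun u : R => (1 - x + -1 * u) `^ q) t != 0 by rewrite gt_eqF // powR_gt0.
  have n2 : (fun u : R => (1 - z + 1 * u) `^ q) t != 0 by rewrite gt_eqF // powR_gt0.
  have H := (is_deriveM (is_deriveM (is_deriveM (is_derive_cst C t 1) d1) d2)
     (is_deriveD (is_deriveD (is_derive_cst Rs t 1) (is_deriveM d3 (@is_deriveV R (fun u : R => (1 - x + -1 * u) `^ q) t _ 1 n1 d1)))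
          (is_deriveM d4 (@is_deriveV R (fun u : R => (1 - z + 1 * u) `^ q) t _ 1 n2 d2)))).
have E := etrans (esym (@derive_val _ _ _ _ _ _ _ H)) (@derive_val _ _ _ _ _ _ _ Dmax).
rewrite /t !fctE /= !mulr0 !addr0 in E.
have hx1 : 0 < 1 - x by lra.
have hz1 : 0 < 1 - z by lra.
rewrite !powRm1 // /GRing.scale /= in E.
have hA : 0 < (1 - x) `^ q by apply: powR_gt0.
have hB : 0 < (1 - z) `^ q by apply: powR_gt0.
have hX : 0 < x `^ q by apply: powR_gt0.
have hZ : 0 < z `^ q by apply: powR_gt0.
set A := (1 - x) `^ q in E hA *.
set B := (1 - z) `^ q in E hB *.
set X := x `^ q in E hX *.
set Z := z `^ q in E hZ *.
apply/eqP; rewrite -subr_eq0; apply/eqP.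
rewrite -[0](mul0r ((q * C * A * B)^-1)) -E.
field.
by rewrite !gt_eqF.
Qed.

Lemma G_injl (R : realType) (q s t : R) : 0 < q -> q < 1 ->
  0 < s -> 0 < t -> s <= 1 - q -> t <= 1 - q -> Gf q s = Gf q t -> s = t.
Proof.
move=> q0 q1 s0 t0 sq tq E.
case: (ltgtP s t) => // h.
- by have := G_dec q0 q1 s0 h tq; rewrite E ltxx.
- by have := G_dec q0 q1 t0 h sq; rewrite E ltxx.
Qed.

Lemma G_injr (R : realType) (q s t : R) : 0 < q -> q < 1 ->
  s < 1 -> t < 1 -> 1 - q <= s -> 1 - q <= t -> Gf q s = Gf q t -> s = t.
Proof.
move=> q0 q1 s0 t0 sq tq E.
case: (ltgtP s t) => // h.
- by have := G_inc q0 q1 sq h t0; rewrite E ltxx.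
- by have := G_inc q0 q1 tq h s0; rewrite E ltxx.
Qed.

Lemma two_values (R : realType) (k : nat) (q : R) (ys : 'I_k -> R) (l1 l2 : 'I_k) :
  0 < q -> q < 1 -> (forall l, 0 < ys l) -> (forall l, ys l < 1) ->
  (forall l, Gf q (ys l) = Gf q (ys l1)) -> ys l1 < ys l2 ->
  exists a b : R,
    [/\ a < 1 - q, 1 - q < b,
        (forall i, ys i = a \/ ys i = b),
        (exists i, ys i = a) & (exists i, ys i = b)].
Proof.
move=> q0 q1 pos lt1 HG l12.
have Hab : Gf q (ys l2) = Gf q (ys l1) := HG l2.
have a1 : ys l1 < 1 - q.
  rewrite ltNge; apply/negP => h.
  by have := G_inc q0 q1 h l12 (lt1 l2); rewrite Hab ltxx.
have b1 : 1 - q < ys l2.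
  rewrite ltNge; apply/negP => h.
  by have := G_dec q0 q1 (pos l1) l12 h; rewrite Hab ltxx.
exists (ys l1), (ys l2); split => //; last by exists l2.
  move=> l; case: (ltgtP (ys l) (1 - q)) => h.
  - left; apply: (G_injl q0 q1 (pos l) (pos l1)); rewrite ?ltW //.
  - right; apply: (G_injr q0 q1 (lt1 l) (lt1 l2)); rewrite ?ltW // HG //.
  - exfalso. have := G_dec q0 q1 (pos l1) a1 (lexx _).
    by rewrite -h HG ltxx.
by exists l1.
Qed.

Lemma yt0 (R : realType) (k : nat) (ys : 'I_k -> R) (i j : 'I_k) l :
  yt ys i j 0 l = ys l.
Proof.
rewrite /yt; case: eqP => [->|_]; first by rewrite addr0.
by case: eqP => [->|_]; rewrite ?subr0.
Qed.

Lemma sum_yt (R : realType) (k : nat) (ys : 'I_k -> R) (i j : 'I_k) t :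
  i != j -> \sum_(l < k) yt ys i j t l = \sum_(l < k) ys l.
Proof.
move=> ij.
have Et := sum_path ys ij (fun w => w) t.
have E0 := sum_path ys ij (fun w => w) 0.
rewrite (eq_bigr _ (fun l _ => yt0 ys i j l)) in E0.
simpl in Et, E0.
rewrite Et E0 addr0 subr0; ring.
Qed.

Definition hq (R : realType) (q w : R) := w `^ q / (1 - w) `^ q.

Lemma pair_eq (R : realType) (k : nat) (q : R) (ys : 'I_k -> R) (i j : 'I_k) :
  i != j -> 0 < q -> (forall l, 0 < ys l) -> (forall l, ys l < 1) ->
  @in_simplex R k ys ->
  (forall y : 'I_k -> R, @in_simplex R k y -> Pq_fun (k:=k) q y <= Pq_fun (k:=k) q ys) ->
  let S := \sum_(l < k) hq q (ys l) in
  (ys i `^ q / (ys i * (1 - ys i) `^ q) - S) / (1 - ys i) =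
  (ys j `^ q / (ys j * (1 - ys j) `^ q) - S) / (1 - ys j).
Proof.
move=> ij q0 pos lt1 [ys0 ysum] Hmax S.
set x := ys i; set z := ys j.
set C := \prod_(l < k | (l != i) && (l != j)) (1 - ys l) `^ q.
set Rs := \sum_(l < k | (l != i) && (l != j)) hq q (ys l).
have SE : S = Rs + x `^ q / (1 - x) `^ q + z `^ q / (1 - z) `^ q.
  rewrite /S -(eq_bigr _ (fun l _ => congr1 (hq q) (yt0 ys i j l))).
  rewrite (sum_path ys ij (hq q)) addr0 subr0 /hq; rewrite -/x -/z -/Rs; ring.
rewrite SE.
have hx : 0 < x := pos i.
have hz : 0 < z := pos j.
have hx1 : x < 1 := lt1 i.
have hz1 : z < 1 := lt1 j.
pose e := Num.min (Num.min x z) (Num.min (1 - x) (1 - z)).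
have e0 : 0 < e by rewrite !lt_min hx hz /=; apply/andP; split; lra.
have ex : e <= x by rewrite /e !ge_min lexx.
have ez : e <= z by rewrite /e !ge_min lexx !orbT.
have ex1 : e <= 1 - x by rewrite /e !ge_min lexx !orbT.
have ez1 : e <= 1 - z by rewrite /e !ge_min lexx !orbT.
have C0 : 0 < C.
  apply: prodr_gt0 => l _; apply: powR_gt0; have := lt1 l; lra.
apply: (core q0 hx hz C0 e0 ex ez ex1 ez1).
have Ex (t : R) : (forall l, yt ys i j t l < 1) ->
   C * (1 - x + -1 * t) `^ q * (1 - z + 1 * t) `^ q *
     (Rs + (x + 1 * t) `^ q / (1 - x + -1 * t) `^ q
         + (z + -1 * t) `^ q / (1 - z + 1 * t) `^ q)
   = Pq_fun q (yt ys i j t).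
  move=> h; rewrite (P_PiS q h) (prod_path ys ij (fun w => (1 - w) `^ q)).
  rewrite (sum_path ys ij (fun w => w `^ q / (1 - w) `^ q)) -/C.
  have -> : \sum_(l < k | (l != i) && (l != j)) ys l `^ q / (1 - ys l) `^ q = Rs by [].
  rewrite -/x -/z.
  have -> : 1 - x + -1 * t = 1 - (x + t) by ring.
  have -> : 1 - z + 1 * t = 1 - (z - t) by ring.
  rewrite mul1r mulN1r.
  have -> : z + - t = z - t by [].
  ring.
move=> t /andP [t1 t2].
have ht : forall l, yt ys i j t l < 1.
  move=> l; rewrite /yt; case: eqP => _; first by rewrite -/x; lra.
  case: eqP => _; first by rewrite -/z; lra.
  exact: lt1.
have h0 : forall l, yt ys i j 0 l < 1 by move=> l; rewrite yt0.
rewrite (Ex t ht) (Ex 0 h0).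
have -> : yt ys i j 0 = ys by apply/funext => l; exact: yt0.
apply: Hmax; split.
  move=> l; rewrite /yt; case: eqP => _; first by rewrite -/x; lra.
  case: eqP => _; first by rewrite -/z; lra.
  exact: ys0.
by rewrite sum_yt.
Qed.

Unset Implicit Arguments.

Theorem corollary4p3 (R : realType) (k : nat) (q : R) (ys : 'I_k -> R) :
  (2 <= k)%N -> 1 / 2 < q -> q < 1 ->
  @in_simplex R k ys -> (forall i, 0 < ys i) ->
  (forall y : 'I_k -> R, @in_simplex R k y -> Pq_fun (k:=k) q y <= Pq_fun (k:=k) q ys) ->
  ~ (forall i, ys i = 1 / k%:R) ->
  exists a b : R,
    [/\ a < 1 - q, 1 - q < b,
        (forall i, ys i = a \/ ys i = b),
        (exists i, ys i = a) & (exists i, ys i = b)].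
Proof.
move=> k2 q12 q1 simp pos Hmax nunif.
have q0 : 0 < q by lra.
case: simp => [ys0 ysum].
have k0 : (0 < k)%N by apply: leq_trans k2.
pose i0 : 'I_k := Ordinal k0.
pose i1 : 'I_k := Ordinal k2.
have i01 : i0 != i1 by [].
have lt1 : forall l, ys l < 1.
  move=> l.
  have [m lm] : exists m, l != m.
    case: (eqVneq l i0) => [->|h]; first by exists i1.
    by exists i0.
  have E := sum_path ys lm (fun w => w) 0; simpl in E.
  rewrite sum_yt // ysum addr0 subr0 in E.
  have : 0 <= \sum_(l0 < k | (l0 != l) && (l0 != m)) ys l0 by apply: sumr_ge0.
  have := pos m; lra.
pose S := \sum_(l < k) hq q (ys l).
pose Dl l := (ys l `^ q / (ys l * (1 - ys l) `^ q) - S) / (1 - ys l).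
have HD : forall l, Dl l = Dl i0.
  move=> l; case: (eqVneq l i0) => [->//|h].
  exact: (pair_eq h q0 pos lt1 (conj ys0 ysum) Hmax).
have Hsum : \sum_(l < k) ys l * (1 - ys l) * Dl l = 0.
  have -> : \sum_(l < k) ys l * (1 - ys l) * Dl l = \sum_(l < k) (hq q (ys l) - ys l * S).
    apply: eq_bigr => l _; rewrite /Dl /hq.
    have h1 : 0 < 1 - ys l by have := lt1 l; lra.
    have h2 : 0 < (1 - ys l) `^ q by apply: powR_gt0.
    have h3 := pos l.
    field; by rewrite !gt_eqF.
  by rewrite sumrB -mulr_suml ysum mul1r subrr.
have Hc : Dl i0 = 0.
  have : Dl i0 * \sum_(l < k) ys l * (1 - ys l) = 0.
    rewrite mulr_sumr; apply: (etrans _ Hsum); apply: eq_bigr => l _; rewrite HD; ring.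
  have Hp : 0 < \sum_(l < k) ys l * (1 - ys l).
    rewrite (bigD1 i0) //=; apply: ltr_pwDl.
      by apply: mulr_gt0; [exact: pos | have := lt1 i0; lra].
    apply: sumr_ge0 => l _; apply: mulr_ge0; [exact: ys0 | have := lt1 l; lra].
  move/eqP; rewrite mulf_eq0 => /orP [/eqP //|/eqP h]; by move: Hp; rewrite h ltxx.
have Hg : forall l, Gf q (ys l) = Gf q (ys i0).
  have Hg' : forall l, ys l `^ q / (ys l * (1 - ys l) `^ q) = S.
    move=> l; have := HD l; rewrite Hc /Dl => /eqP.
    have h1 : 1 - ys l != 0 by rewrite gt_eqF //; have := lt1 l; lra.
    rewrite mulf_eq0 invr_eq0 (negbTE h1) orbF subr_eq0 => /eqP //.
  move=> l; apply: expR_inj; rewrite -!gG ?Hg' //; by [exact: pos | exact: lt1].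
have kpos : (0:R) < k%:R by rewrite ltr0n.
have [i hi] : exists i, ys i != 1 / k%:R.
  apply: contrapT => H; apply: nunif => i; apply/eqP; apply/negPn/negP => h.
  by apply: H; exists i.
have [l1 [l2 l12]] : exists l1 l2, ys l1 < ys l2.
  case: (ltgtP (ys i) (1 / k%:R)) hi => // h _.
  - apply: contrapT => H; have : \sum_(l < k) ys l <= \sum_(l < k) ys i.
      apply: ler_sum => l _; rewrite leNgt; apply/negP => hl.
      by apply: H; exists i, l.
    rewrite sumr_const card_ord ysum -mulr_natr.
    move: h; rewrite ltr_pdivlMr // ?mul1r ?mul1r => h1 h2; lra.
  - apply: contrapT => H; have : \sum_(l < k) ys i <= \sum_(l < k) ys l.
      apply: ler_sum => l _; rewrite leNgt; apply/negP => hl.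
      by apply: H; exists l, i.
    rewrite sumr_const card_ord ysum -mulr_natr.
    move: h; rewrite ltr_pdivrMr // ?mul1r ?mul1r => h1 h2; lra.
apply: (@two_values R k q ys l1 l2) => //.
by move=> l; rewrite (Hg l) (Hg l1).
Qed.
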